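(* Let $f:\mathbb{R}^n\to\mathbb{R}$ be twice continuously differentiable with Lipschitz continuous Hessian $\nabla^2 f$, let $x\in\mathbb{R}^n$ with $\nabla^2 f(x)$ invertible, and let $y^1,\dots,y^p\in\mathbb{R}^n$ with $p\ge n$. Set $z^\ell=\nabla^2 f(x)(y^\ell-x)$, $\Delta_y=\max_{1\le\ell\le p}\|y^\ell-x\|$, $\Delta_z=\max_{1\le\ell\le p}\|z^\ell\|$, and let $M_L^z$ be the $p\times n$ matrix with rows $(1/\Delta_z)(z^\ell)^\top$, $\ell=1,\dots,p$. Suppose $M_L^z$ has full column rank, and let $\Lambda_z$ be a bound on the norm of the left inverse of $M_L^z$. If $d^N\in\mathbb{R}^n$ satisfies $$(z^\ell)^\top d^N=-f(y^\ell)+f(x)+\tfrac12 (y^\ell-x)^\top z^\ell,\qquad \ell=1,\dots,p,$$ (in the least-squares sense when $p>n$), then $$\left\|-\nabla^2 f(x)^{-1}\nabla f(x)-d^N\right\|\le \Lambda_z\,\mathcal{O}\!\left(\frac{\Delta_y^3}{\Delta_z}\right),$$ where the multiplicative constant in $\mathcal{O}$ depends on the Lipschitz constant of $\nabla^2 f$.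
   Context: $\mathcal{O}(A)$ denotes a constant times $A$, where the constant is independent of $A$. Norms are Euclidean. *)

(* Defs.v *)
From HB Require Import structures.
From mathcomp Require Import all_boot all_order all_algebra.
From mathcomp Require Import all_classical all_reals all_analysis.
Set Implicit Arguments. Unset Strict Implicit. Unset Printing Implicit Defensive.
Import Order.TTheory GRing.Theory Num.Theory.
Import numFieldNormedType.Exports.
Local Open Scope ring_scope.

Section Defs.
Variable R : realType.

Definition dotv (k : nat) (u v : 'cV[R]_k) : R := (u^T *m v) 0 0.
Definition enorm (k : nat) (v : 'cV[R]_k) : R := Num.sqrt (\sum_i (v i 0) ^+ 2).

Definition grad (n : nat) (f : 'cV[R]_n -> R) (x : 'cV[R]_n) : 'cV[R]_n :=
  \col_i ('d f x (delta_mx i 0)).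

(* Hessian: Frechet derivative of the gradient; entry (i,j) = d_j d_i f *)
Definition hessian (n : nat) (f : 'cV[R]_n -> R) (x : 'cV[R]_n) : 'M[R]_n :=
  \matrix_(i, j) ('d (grad f) x (delta_mx j 0)) i 0.

Definition C2 (n : nat) (f : 'cV[R]_n -> R) : Prop :=
  (forall x, differentiable f x) /\ (forall x, differentiable (grad f) x) /\
  continuous (hessian f).

Definition hessian_lipschitz (n : nat) (f : 'cV[R]_n -> R) (L : R) : Prop :=
  forall x y (v : 'cV[R]_n),
    enorm ((hessian f x - hessian f y) *m v) <= L * enorm (x - y) * enorm v.

Definition maxnorm (p : nat) (a : 'I_p -> R) : R := \big[Num.max/0]_(l < p) a l.

(* the (Moore-Penrose) left inverse of a full column rank matrix *)
Definition left_inv (p n : nat) (M : 'M[R]_(p, n)) : 'M[R]_(n, p) :=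
  invmx (M^T *m M) *m M^T.
End Defs.

(* Main.v *)
Require Import Defs.
From HB Require Import structures.
From mathcomp Require Import all_boot all_order all_algebra.
From mathcomp Require Import all_classical all_reals all_analysis.
Set Warnings "-all".
From mathcomp Require Import ring lra.
Import Order.TTheory GRing.Theory Num.Theory.
Import numFieldNormedType.Exports.
Local Open Scope ring_scope.

Section S.
Context {R : realType} {n : nat}.
Implicit Types (y s : 'cV[R]_n).

Lemma line_diff y s (t : R) : differentiable (fun u : R => u *: s + y) t /\
  'd (fun u : R => u *: s + y) t 1 = s.
Proof.
have h : is_diff t (fun u : R => u *: s + y) (( *:%R ^~ s) + 0).
  have -> : (fun u : R => u *: s + y) = ( *:%R ^~ s) + cst y by [].
  exact: is_diffD.
split; first exact: ex_diff.
by rewrite diff_val /= !fctE scale1r addr0.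
Qed.

Lemma line_derive (W : normedModType R) (F : 'cV[R]_n -> W) y s t :
  differentiable F (t *: s + y) ->
  is_derive t 1 (fun u : R => F (u *: s + y)) ('d F (t *: s + y) s).
Proof.
move=> dF; have [dl dl1] := line_diff y s t.
have dc : differentiable (F \o (fun u : R => u *: s + y)) t.
  exact: differentiable_comp.
apply: is_derive_eq.
  apply: derivableP; exact: diff_derivable.
rewrite deriveE // diff_comp //= dl1 //.
Qed.

Lemma sum_delta_cV s : s = \sum_i s i 0 *: delta_mx i 0.
Proof.
rewrite {1}(matrix_sum_delta s); apply: eq_bigr => i _.
by rewrite big_ord1.
Qed.

Lemma diff_sum (W : normedModType R) (F : 'cV[R]_n -> W) y s :
  'd F y s = \sum_i s i 0 *: 'd F y (delta_mx i 0).
Proof.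
rewrite {1}(sum_delta_cV s) linear_sum; apply: eq_bigr => i _.
by rewrite linearZ.
Qed.

Lemma dF_grad (f : 'cV[R]_n -> R) y s :
  'd f y s = \sum_i grad f y i 0 * s i 0.
Proof.
rewrite diff_sum; apply: eq_bigr => i _; by rewrite mxE mulrC.
Qed.

Lemma diff_coord (M : 'M[R]_(n, 1)) j :
  'd (fun N : 'M[R]_(n, 1) => N j 0) M = (fun N => N j 0) :> (_ -> R).
Proof.
have glin : linear (fun N : 'M[R]_(n, 1) => N j 0 : R).
  by move=> a u v; rewrite !mxE.
pose gM := GRing.isLinear.Build _ _ _ _ _ glin.
pose g : {linear 'M[R]_(n, 1) -> R} := HB.pack (fun N : 'M[R]_(n, 1) => N j 0 : R) gM.
rewrite (_ : (fun _ => _) = g) //; apply: diff_lin; exact: coord_continuous.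
Qed.

Lemma dgrad_comp (f : 'cV[R]_n -> R) y s j :
  differentiable (grad f) y ->
  'd (fun z => grad f z j 0) y s = (hessian f y *m s) j 0.
Proof.
move=> dg.
have -> : (fun z => grad f z j 0) = (fun N : 'M[R]_(n, 1) => N j 0) \o grad f
  by [].
rewrite diff_comp //; last exact: differentiable_coord.
rewrite diff_coord /= diff_sum summxE !mxE; apply: eq_bigr => i _.
by rewrite !mxE mulrC.
Qed.


Lemma enorm_ge0 {k : nat} (v : 'cV[R]_k) : 0 <= enorm v.
Proof. exact: sqrtr_ge0. Qed.

Lemma coord_le_enorm {k : nat} (v : 'cV[R]_k) i : `|v i 0| <= enorm v.
Proof.
rewrite /enorm -sqrtr_sqr; apply: ler_wsqrtr.
rewrite (bigD1 i) //= lerDl; apply: sumr_ge0 => ? _; exact: sqr_ge0.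
Qed.

Lemma enormZ {k : nat} (a : R) (v : 'cV[R]_k) : enorm (a *: v) = `|a| * enorm v.
Proof.
rewrite /enorm (eq_bigr (fun i => a ^+ 2 * v i 0 ^+ 2)); last first.
  by move=> i _; rewrite mxE exprMn.
by rewrite -mulr_sumr sqrtrM ?sqr_ge0 // sqrtr_sqr.
Qed.

Lemma enormN {k : nat} (v : 'cV[R]_k) : enorm (- v) = enorm v.
Proof. by rewrite -scaleN1r enormZ normrN normr1 mul1r. Qed.

Lemma enorm_delta {k : nat} (i : 'I_k) : enorm (delta_mx i 0 : 'cV[R]_k) = 1.
Proof.
rewrite /enorm (bigD1 i) //= big1 ?addr0; last first.
  by move=> j /negPf ji; rewrite mxE ji /= expr0n.
by rewrite mxE !eqxx /= expr1n sqrtr1.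
Qed.

Lemma enorm_le_sum {k : nat} (v : 'cV[R]_k) : enorm v <= \sum_i `|v i 0|.
Proof.
rewrite /enorm -[X in _ <= X]ger0_norm ?sumr_ge0 // -sqrtr_sqr.
apply: ler_wsqrtr; rewrite expr2 mulr_suml; apply: ler_sum => i _.
rewrite -[v i 0 ^+ 2]ger0_norm ?sqr_ge0 // expr2 normrM; apply: ler_wpM2l => //.
by rewrite (bigD1 i) //= lerDl sumr_ge0.
Qed.

Lemma mvt01 (psi dpsi : R -> R) (K : R) :
  (forall u : R, is_derive u (1 : R) psi (dpsi u)) ->
  (forall u, 0 <= u <= 1 -> `|dpsi u| <= K) -> `|psi 1 - psi 0| <= K.
Proof.
move=> hd hb.
have [c c01 ->] := MVT_segment ler01 (fun u _ => hd u)
  (derivable_within_continuous (fun u _ => @ex_derive _ _ _ _ _ _ _ (hd u))).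
rewrite subr0 mulr1; apply: hb; by move: c01; rewrite in_itv.
Qed.

Lemma is_derive_mulc (c u : R) : is_derive u (1 : R) (fun t : R => t * c) c.
Proof.
have h : is_derive u (1 : R) (@id R) 1 by exact: is_derive_id.
have := is_deriveM h (is_derive_cst c u 1).
by rewrite scaler0 add0r /= scaler1.
Qed.


Lemma aux_E (a b c : R) : a - c - (b - 0 * c) = a - b - c.
Proof. by rewrite mul0r subr0 addrAC. Qed.

Lemma T1 (f : 'cV[R]_n -> R) L y s j : C2 f -> hessian_lipschitz f L ->
  `|grad f (s + y) j 0 - grad f y j 0 - (hessian f y *m s) j 0|
     <= `|L| * enorm s ^+ 2.
Proof.
move=> [df [dg _]] HL.
pose c : R := (hessian f y *m s) j 0.
rewrite -/c.
pose psi u := grad f (u *: s + y) j 0 - u * c.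
pose dpsi u := (hessian f (u *: s + y) *m s) j 0 - c.
have hd u : is_derive u (1 : R) psi (dpsi u).
  have h1 : is_derive u (1 : R) (fun t => grad f (t *: s + y) j 0)
      ((hessian f (u *: s + y) *m s) j 0).
    rewrite -dgrad_comp //.
    apply: (@line_derive _ (fun z => grad f z j 0) y s u).
    rewrite (_ : (fun z => grad f z j 0) = (fun N : 'M[R]_(n, 1) => N j 0) \o grad f) //.
    apply: differentiable_comp => //; exact: differentiable_coord.
  exact: (is_deriveB h1 (is_derive_mulc c u)).
have := @mvt01 psi dpsi (`|L| * enorm s ^+ 2) hd.
have E : psi 1 - psi 0 = grad f (s + y) j 0 - grad f y j 0 - c.
  rewrite /psi. rewrite scale1r scale0r add0r.
  rewrite (mul1r c).
  exact: aux_E.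
rewrite -E; apply => u /andP[u0 u1].
rewrite /dpsi /c.

have -> : (hessian f (u *: s + y) *m s) j 0 - (hessian f y *m s) j 0
    = ((hessian f (u *: s + y) - hessian f y) *m s) j 0.
  rewrite mulmxBl. by rewrite [RHS]mxE [X in _ = _ + X]mxE.
apply: (le_trans (coord_le_enorm _ j)).
apply: (le_trans (HL _ _ _)).
have -> : u *: s + y - y = u *: s by rewrite addrK.
have e0 := enorm_ge0 s.
rewrite enormZ ger0_norm //.
apply: le_trans (_ : `|L| * (u * enorm s) * enorm s <= _).
  apply: ler_wpM2r => //; apply: ler_wpM2r; [exact: mulr_ge0|exact: ler_norm].
rewrite -!mulrA; apply: ler_wpM2l => //; rewrite expr2.
by rewrite -[X in _ <= X]mul1r; apply: ler_wpM2r => //; exact: mulr_ge0.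
Qed.




Lemma mulmxZ_coord (A : 'M[R]_n) (t : R) s i :
  (A *m (t *: s)) i 0 = t * (A *m s) i 0.
Proof. by rewrite -scalemxAr [LHS]mxE. Qed.

Lemma aux_T2 (G a b t : R) :
  G - a - (t * b + t * b) = G - a - t * (2 * b).
Proof. by rewrite mulrA mulr_natr mulr2n mulrDl. Qed.

Lemma two_neq0 : (2 : R) != 0.
Proof. by rewrite pnatr_eq0. Qed.

Lemma aux_T2b (gz gy si t h : R) :
  gz * si - gy * si - t * (si * h) = si * (gz - gy - t * h).
Proof. by rewrite mulrBr mulrBr (mulrC si gz) (mulrC si gy) (mulrCA si t h). Qed.

Lemma aux_T2c (F1 F0 a b : R) :
  F1 - 1 * a - 1 * (1 * b) - (F0 - 0 * a - 0 * (0 * b)) = F1 - F0 - a - b.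
Proof. ring. Qed.

Lemma T2 (f : 'cV[R]_n -> R) L y s : C2 f -> hessian_lipschitz f L ->
  `|f (s + y) - f y - \sum_i grad f y i 0 * s i 0
     - 2^-1 * \sum_i s i 0 * (hessian f y *m s) i 0|
     <= n%:R * `|L| * enorm s ^+ 3.
Proof.
move=> hC HL; have [df [dg _]] := hC.
pose a : R := \sum_i grad f y i 0 * s i 0.
pose b : R := 2^-1 * \sum_i s i 0 * (hessian f y *m s) i 0.
rewrite -/a -/b.
pose psi (t : R) := f (t *: s + y) - t * a - t * (t * b).
pose dpsi (t : R) := \sum_i s i 0 * (grad f (t *: s + y) i 0 - grad f y i 0
                         - (hessian f y *m (t *: s)) i 0).
have hd t : is_derive t (1 : R) psi (dpsi t).
  have h1 := line_derive _ _ _ _ _ (df (t *: s + y)).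
  have hid : is_derive t (1 : R) (@id R) 1 by exact: is_derive_id.
  have h3 := is_deriveM hid (is_derive_mulc b t).
  have := is_deriveB (is_deriveB h1 (is_derive_mulc a t)) h3.
  move=> h; apply: is_derive_eq h _.
  have -> : t *: b + (t * b)%:A = t * b + t * b.
    by rewrite /GRing.scale /= mulr1.
  rewrite aux_T2 /b (mulrA 2) (mulfV two_neq0) mul1r dF_grad /dpsi.
  under [RHS]eq_bigr do rewrite mulmxZ_coord.
  rewrite mulr_sumr -!sumrB; apply: eq_bigr => i _; exact: aux_T2b.
have := @mvt01 psi dpsi (n%:R * `|L| * enorm s ^+ 3) hd.
have E : psi 1 - psi 0 = f (s + y) - f y - a - b.
  rewrite /psi scale1r scale0r add0r; exact: aux_T2c.
rewrite -E; apply => u /andP[u0 u1].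
have e0 := enorm_ge0 s.
apply: (le_trans (ler_norm_sum _ _ _)).
apply: (@le_trans _ _ (\sum_(i < n) enorm s * (`|L| * enorm s ^+ 2))).
  apply: ler_sum => i _; rewrite normrM.
  apply: ler_pM => //; first exact: coord_le_enorm.
  apply: (le_trans (T1 _ _ y (u *: s) i hC HL)).
  apply: ler_wpM2l => //; rewrite enormZ ger0_norm //.
  rewrite lerXn2r ?nnegrE ?mulr_ge0 //.
  by rewrite -[X in _ <= X]mul1r ler_wpM2r.
rewrite sumr_const card_ord -mulr_natl.
by rewrite le_eqVlt; apply/orP; left; apply/eqP; ring.
Qed.


End S.


Section S.
Context {R : realType} {n : nat}.
Implicit Types (y s : 'cV[R]_n).

Lemma cV_subE (A B : 'cV[R]_n) k : (A - B) k 0 = A k 0 - B k 0.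
Proof. by rewrite !mxE. Qed.

Lemma cV_scaleE (t : R) (A : 'cV[R]_n) k : (t *: A) k 0 = t * A k 0.
Proof. by rewrite !mxE. Qed.

Lemma sum_delta_r (F : 'I_n -> R) j :
  \sum_k F k * (delta_mx j 0 : 'cV[R]_n) k 0 = F j.
Proof.
rewrite (bigD1 j) //= big1 => [|k /negPf kj].
  by rewrite mxE !eqxx mulr1 addr0.
by rewrite mxE kj mulr0.
Qed.

Lemma norm4 (a b c d : R) : `|a - b + c + d| <= `|a| + `|b| + `|c| + `|d|.
Proof.
apply: (le_trans (ler_normD _ _)); rewrite lerD2r.
apply: (le_trans (ler_normD _ _)); rewrite lerD2r.
by apply: (le_trans (ler_normB _ _)).
Qed.

Lemma B_est (f : 'cV[R]_n -> R) L (x u v : 'cV[R]_n) : C2 f -> hessian_lipschitz f L ->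
  `|f (v + (u + x)) - f (u + x) - f (v + x) + f x
      - \sum_k (hessian f x *m u) k 0 * v k 0|
  <= n%:R * `|L| * enorm v ^+ 3 + n%:R * `|L| * enorm v ^+ 3
     + n%:R * (`|L| * enorm u ^+ 2 * enorm v)
     + n%:R * (enorm v * (`|L| * enorm u * enorm v)).
Proof.
move=> hC HL.
have hE1 := T2 f L (u + x) v hC HL.
have hE0 := T2 f L x v hC HL.
set A1 := \sum_i grad f (u + x) i 0 * v i 0 in hE1.
set B1 := 2^-1 * \sum_i v i 0 * (hessian f (u + x) *m v) i 0 in hE1.
set A0 := \sum_i grad f x i 0 * v i 0 in hE0.
set B0 := 2^-1 * \sum_i v i 0 * (hessian f x *m v) i 0 in hE0.
set Huv := \sum_k (hessian f x *m u) k 0 * v k 0.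
have eqA : A1 - A0 - Huv = \sum_k (grad f (u + x) k 0 - grad f x k 0
                             - (hessian f x *m u) k 0) * v k 0.
  rewrite /A1 /A0 /Huv. rewrite -sumrB. rewrite -sumrB. apply: eq_bigr => k _. by rewrite -!mulrBl.
have eqB : B1 - B0 = 2^-1 * \sum_k v k 0 *
                      ((hessian f (u + x) - hessian f x) *m v) k 0.
  rewrite /B1 /B0 -mulrBr -sumrB; congr (_ * _); apply: eq_bigr => k _.
  by rewrite mulmxBl cV_subE mulrBr.
clearbody A1 B1 A0 B0 Huv.
have -> : f (v + (u + x)) - f (u + x) - f (v + x) + f x - Huv =
   (f (v + (u + x)) - f (u + x) - A1 - B1) - (f (v + x) - f x - A0 - B0)
   + (A1 - A0 - Huv) + (B1 - B0) by ring.
rewrite eqA eqB; apply: (le_trans (norm4 _ _ _ _)).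
have eu := enorm_ge0 u; have ev := enorm_ge0 v.
apply: lerD; first apply: lerD; first apply: lerD.
- exact: hE1.
- exact: hE0.
- apply: (le_trans (ler_norm_sum _ _ _)).
  rewrite mulr_natl -[X in _ *+ X]card_ord -sumr_const.
  apply: ler_sum => k _; rewrite normrM.
  apply: ler_pM => //; last exact: coord_le_enorm.
  have := T1 f L x u k hC HL; by rewrite addrC.
- rewrite normrM.
  apply: (@le_trans _ _ (\sum_k `|v k 0 * ((hessian f (u + x) - hessian f x) *m v) k 0|)).
    rewrite -[X in _ <= X]mul1r; apply: ler_pM => //.
      by rewrite ger0_norm ?invr_ge0 // invf_le1 // ler1n.
    exact: ler_norm_sum.
  rewrite mulr_natl -[X in _ *+ X]card_ord -sumr_const.
  apply: ler_sum => k _; rewrite normrM.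
  apply: ler_pM => //; first exact: coord_le_enorm.
  apply: (le_trans (coord_le_enorm _ k)); apply: (le_trans (HL _ _ _)).
  rewrite addrK; apply: ler_wpM2r => //; apply: ler_wpM2r => //.
  exact: ler_norm.
Qed.

Lemma mul_delta_coord (A : 'M[R]_n) (i k : 'I_n) : (A *m (delta_mx i 0 : 'cV[R]_n)) k 0 = A k i.
Proof. by rewrite -colE mxE. Qed.

Lemma aux_mul4 (t h d : R) : (t * h) * (t * d) = t * t * h * d.
Proof. ring. Qed.

Lemma small_zero (a C : R) :
  (forall t : R, 0 < t -> `|a| <= C * t) -> a = 0.
Proof.
move=> H; suff : `|a| <= 0 by rewrite normr_le0 => /eqP.
apply/ler_addgt0Pr => e e0; rewrite add0r.
pose K := `|C| + 1.
have K0 : 0 < K by rewrite /K ltr_wpDl.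
have t0 : 0 < e / K by rewrite divr_gt0.
apply: (le_trans (H _ t0)).
apply: (@le_trans _ _ (K * (e / K))).
  by apply: ler_wpM2r; [exact: ltW | rewrite /K (le_trans (ler_norm C)) // lerDl].
by rewrite mulrC divfK // gt_eqF.
Qed.

Lemma hess_sym (f : 'cV[R]_n -> R) L x i j : C2 f -> hessian_lipschitz f L ->
  hessian f x i j = hessian f x j i.
Proof.
move=> hC HL; apply/eqP; rewrite -subr_eq0; apply/eqP.
apply: (@small_zero _ (8 * n%:R * `|L|)) => t t0.
have hUV (p q : 'I_n) : \sum_k (hessian f x *m (t *: (delta_mx p 0 : 'cV[R]_n))) k 0 *
    (t *: delta_mx q 0 : 'cV[R]_n) k 0 = t * t * hessian f x q p.
  rewrite -(sum_delta_r (fun k => t * t * hessian f x k p) q).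
  apply: eq_bigr => k _.
  by rewrite mulmxZ_coord cV_scaleE mul_delta_coord aux_mul4.
have en (p : 'I_n) : enorm (t *: delta_mx p 0 : 'cV[R]_n) = t.
  by rewrite enormZ enorm_delta mulr1 gtr0_norm.
have h1 := B_est f L x (t *: delta_mx i 0) (t *: delta_mx j 0) hC HL.
have h2 := B_est f L x (t *: delta_mx j 0) (t *: delta_mx i 0) hC HL.
rewrite hUV !en in h1; rewrite hUV !en in h2.
move: h1 h2.
rewrite (addrCA (t *: delta_mx j 0)).
set B := f _ - _ - _ + f x.
set B' := f _ - _ - _ + f x.
have -> : B' = B by rewrite /B /B'; ring.
move=> h1 h2.
have t2 : 0 < t * t by rewrite mulr_gt0.
rewrite -(ler_pM2l t2).
have -> : t * t * (8 * n%:R * `|L| * t) =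
   (n%:R * `|L| * t ^+ 3 + n%:R * `|L| * t ^+ 3 + n%:R * (`|L| * t ^+ 2 * t) +
    n%:R * (t * (`|L| * t * t))) +
   (n%:R * `|L| * t ^+ 3 + n%:R * `|L| * t ^+ 3 + n%:R * (`|L| * t ^+ 2 * t) +
    n%:R * (t * (`|L| * t * t))) by ring.
clearbody B; move: h1 h2.
move: (hessian f x i j) (hessian f x j i) B => hij hji Bv h1 h2.
apply: (@le_trans _ _ `|(Bv - t * t * hji) - (Bv - t * t * hij)|).
  rewrite (_ : Bv - t * t * hji - (Bv - t * t * hij) = t * t * (hij - hji)).
    by rewrite normrM (gtr0_norm t2).
  by ring.
apply: (le_trans (ler_normB _ _)); exact: lerD.
Qed.
End S.


Section S.
Context {R : realType} {n : nat}.
Implicit Types (y s : 'cV[R]_n).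

Lemma dotvE {k : nat} (u v : 'cV[R]_k) : dotv u v = \sum_i u i 0 * v i 0.
Proof. by rewrite /dotv mxE; apply: eq_bigr => i _; rewrite mxE. Qed.

Lemma enorm_sqr {k : nat} (v : 'cV[R]_k) : enorm v ^+ 2 = \sum_i v i 0 ^+ 2.
Proof. by rewrite /enorm sqr_sqrtr // sumr_ge0 // => i _; exact: sqr_ge0. Qed.

Lemma sqsum_eq0 {k m : nat} (X : 'M[R]_(k, m)) : X *m X^T = 0 -> X = 0.
Proof.
move=> h; apply/matrixP => i j.
have := congr1 (fun A : 'M[R]_k => A i i) h.
rewrite [LHS]mxE [RHS]mxE => /eqP; rewrite psumr_eq0; last first.
  by move=> l _; rewrite mxE -expr2 sqr_ge0.
move=> /allP /(_ j (mem_index_enum _)); rewrite mxE -expr2 sqrf_eq0 => /eqP ->.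
by rewrite mxE.
Qed.

Lemma MtM_unit {p : nat} (M : 'M[R]_(p, n)) : \rank M = n -> M^T *m M \in unitmx.
Proof.
move=> hr; rewrite -row_free_unit -kermx_eq0.
have hK := mulmx_ker (M^T *m M).
have h0 : (kermx (M^T *m M) *m M^T) *m (kermx (M^T *m M) *m M^T)^T = 0.
  by rewrite trmx_mul trmxK !mulmxA -(mulmxA _ M^T M) hK mul0mx.
have := @sqsum_eq0 _ _ _ h0 => /eqP.
rewrite mulmx_free_eq0 //.
by rewrite /row_free mxrank_tr hr.
Qed.

Lemma quad_zero (a c : R) : 0 <= c ->
  (forall t : R, 0 <= 2 * t * a + t ^+ 2 * c) -> a = 0.
Proof.
move=> c0 h.
have c1 : c + 1 != 0 by rewrite gt_eqF // ltr_wpDl.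
have := h (- a / (c + 1)).
have -> : 2 * (- a / (c + 1)) * a + (- a / (c + 1)) ^+ 2 * c =
   - (a ^+ 2 * (c + 2)) / (c + 1) ^+ 2 by field.
rewrite pmulr_lge0; last by rewrite invr_gt0 exprn_gt0 // ltr_wpDl.
rewrite oppr_ge0 pmulr_lle0; last by rewrite ltr_wpDl.
by rewrite le_eqVlt ltNge sqr_ge0 orbF sqrf_eq0 => /eqP.
Qed.

Lemma aux3 (a b c : R) : a * (b * c) = c * (b * a).
Proof. ring. Qed.

Lemma aux_sq (r t q : R) : (r + t * q) ^+ 2 - r ^+ 2 = 2 * t * (r * q) + t ^+ 2 * q ^+ 2.
Proof. ring. Qed.

Lemma aux_lin (d t e b : R) : d + t * e - b = d - b + t * e.
Proof. ring. Qed.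

Lemma dotvDZ {k : nat} (u v w : 'cV[R]_k) (t : R) :
  dotv u (v + t *: w) = dotv u v + t * dotv u w.
Proof.
rewrite !dotvE mulr_sumr -big_split; apply: eq_bigr => i _.
by rewrite !mxE mulrDr mulrCA.
Qed.

Lemma sq_le {a b : R} : 0 <= a -> a <= b -> a ^+ 2 <= b ^+ 2.
Proof. by move=> a0 ab; rewrite !expr2 ler_pM. Qed.

Lemma lsq_normal {p : nat} (z : 'I_p -> 'cV[R]_n) (b : 'I_p -> R) (dN : 'cV[R]_n) :
  (forall d, enorm (\col_l (dotv (z l) dN - b l) : 'cV[R]_p)
             <= enorm (\col_l (dotv (z l) d - b l) : 'cV[R]_p)) ->
  forall j, \sum_l z l j 0 * (dotv (z l) dN - b l) = 0.
Proof.
move=> H j.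
pose rho l := dotv (z l) dN - b l.
pose w : 'cV[R]_n := \col_k \sum_l z l k 0 * rho l.
pose q l := dotv (z l) w.
pose al := \sum_l rho l * q l.
pose c := \sum_l q l ^+ 2.
have hal : al = \sum_k w k 0 ^+ 2.
  rewrite /al /q; under eq_bigr do rewrite dotvE mulr_sumr.
  rewrite exchange_big /=; apply: eq_bigr => k _.
  rewrite expr2 {2}/w mxE mulr_sumr; apply: eq_bigr => l _.
  exact: aux3.
have c0 : 0 <= c by rewrite sumr_ge0 // => l _; exact: sqr_ge0.
have key t : 0 <= 2 * t * al + t ^+ 2 * c.
  have := H (dN + t *: w).
  have -> : \col_l (dotv (z l) (dN + t *: w) - b l) =
            \col_l (rho l + t * q l) :> 'cV[R]_p.
    by apply/matrixP => l k; rewrite !mxE dotvDZ aux_lin.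
  move=> /(sq_le (enorm_ge0 _)); rewrite !enorm_sqr.
  under eq_bigr do rewrite mxE.
  under [X in _ <= X -> _]eq_bigr do rewrite mxE.
  rewrite -subr_ge0 -sumrB.
  have -> : \sum_l ((rho l + t * q l) ^+ 2 - rho l ^+ 2) = 2 * t * al + t ^+ 2 * c.
    rewrite /al /c !mulr_sumr -big_split; apply: eq_bigr => l _.
    exact: aux_sq.
  by [].
have := quad_zero al c c0 key; rewrite hal => /eqP.
rewrite psumr_eq0; last by move=> k _; exact: sqr_ge0.
move=> /allP /(_ j (mem_index_enum _)); rewrite sqrf_eq0 => /eqP.
by rewrite /w mxE.
Qed.

End S.


Section T.
Context {R : realType} {n p : nat}.

Lemma HL3 (z : 'I_p -> 'cV[R]_n) (Dz : R) (M : 'M[R]_(p, n))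
  (hM : M = \matrix_(l, j) (z l j 0 / Dz)) : Dz = 0 -> M = 0.
Proof.
move=> D0; apply/matrixP => l j; rewrite hM !mxE D0 invr0 mulr0.
by [].
Qed.

Lemma aux_div (a c r : R) : a / c * r = c^-1 * (a * r).
Proof. ring. Qed.

Lemma aux_sub2 (a c b : R) : a - b - (c - b) = a - c.
Proof. ring. Qed.

Lemma aux_div2 (D a u v : R) : D != 0 -> a * u - a * v = D * (a / D * (u - v)).
Proof. by move=> D0; field. Qed.

Lemma HL1 (z : 'I_p -> 'cV[R]_n) (Dz : R) (M : 'M[R]_(p, n))
  (hM : M = \matrix_(l, j) (z l j 0 / Dz)) (b : 'I_p -> R) (dN : 'cV[R]_n) :
  (forall j, \sum_l z l j 0 * (dotv (z l) dN - b l) = 0) ->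
  M^T *m (\col_l (dotv (z l) dN - b l) : 'cV[R]_p) = 0.
Proof.
move=> h; apply/matrixP => j k; rewrite (ord1 k) [RHS]mxE [LHS]mxE.
rewrite (eq_bigr (fun l => Dz^-1 * (z l j 0 * (dotv (z l) dN - b l)))).
  by rewrite -mulr_sumr h mulr0.
by move=> l _; rewrite hM !mxE aux_div.
Qed.

Lemma HL2 (z : 'I_p -> 'cV[R]_n) (Dz : R) (M : 'M[R]_(p, n))
  (hM : M = \matrix_(l, j) (z l j 0 / Dz)) (b : 'I_p -> R) (d1 d2 : 'cV[R]_n) :
  Dz != 0 ->
  (\col_l (dotv (z l) d1 - b l) : 'cV[R]_p) - \col_l (dotv (z l) d2 - b l)
  = Dz *: (M *m (d1 - d2)).
Proof.
move=> D0; apply/matrixP => l k; rewrite (ord1 k) !mxE hM.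
rewrite aux_sub2 !dotvE -sumrB mulr_sumr; apply: eq_bigr => i _.
by rewrite !mxE (aux_div2 _ _ _ _ D0).
Qed.


End T.

Section U.
Context {R : realType} {n : nat}.

Lemma aux_res (A B S1 S2 : R) : - S1 - (- A + B + 2^-1 * S2) = A - B - S1 - 2^-1 * S2.
Proof. ring. Qed.

Lemma resid (f : 'cV[R]_n -> R) L x (y : 'cV[R]_n) : C2 f -> hessian_lipschitz f L ->
  hessian f x \in unitmx ->
  `|dotv (hessian f x *m (y - x)) (- (invmx (hessian f x) *m grad f x))
    - (- f y + f x + 2^-1 * dotv (y - x) (hessian f x *m (y - x)))|
  <= n%:R * `|L| * enorm (y - x) ^+ 3.
Proof.
move=> hC HL hU.
have hsym : (hessian f x)^T = hessian f x.
  by apply/matrixP => i j; rewrite [LHS]mxE; exact: hess_sym hC HL.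
set s := y - x.
have ys : y = s + x by rewrite /s subrK.
have hd : dotv (hessian f x *m s) (- (invmx (hessian f x) *m grad f x))
          = - \sum_i grad f x i 0 * s i 0.
  rewrite /dotv trmx_mul hsym mulmxN -!mulmxA (mulmxA (hessian f x)).
  rewrite (mulmxV hU) mul1mx [LHS]mxE; congr (- _).
  rewrite -/(dotv s (grad f x)) dotvE; apply: eq_bigr => i _; exact: mulrC.
rewrite hd dotvE {1}ys aux_res.
exact: T2.
Qed.
End U.

Theorem theorem4 (R : realType) (n p : nat) (L : R) (hpn : (n <= p)%N) :
  exists C : R,
  forall (f : 'cV[R]_n -> R) (x : 'cV[R]_n) (y : 'I_p -> 'cV[R]_n)
         (Lam : R) (dN : 'cV[R]_n),
    C2 f -> hessian_lipschitz f L ->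
    hessian f x \in unitmx ->
    let H := hessian f x in
    let z := fun l => H *m (y l - x) in
    let Dy := maxnorm (fun l => enorm (y l - x)) in
    let Dz := maxnorm (fun l => enorm (z l)) in
    let M : 'M[R]_(p, n) := \matrix_(l, j) ((z l) j 0 / Dz) in
    \rank M = n ->
    (forall v : 'cV[R]_p, enorm (left_inv M *m v) <= Lam * enorm v) ->
    let b := fun l => - f (y l) + f x + 2^-1 * dotv (y l - x) (z l) in
    let res := fun d : 'cV[R]_n => \col_l (dotv (z l) d - b l) in
    (p = n -> forall l, dotv (z l) dN = b l) ->
    ((n < p)%N -> forall d, enorm (res dN) <= enorm (res d)) ->
    enorm (- (invmx H *m grad f x) - dN) <= Lam * (C * (Dy ^+ 3 / Dz)).
Proof.
exists (p%:R * n%:R * `|L|).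
move=> f x y Lam dN hC HL hU H z Dy Dz M hr hLam b res hsq hls.
have Dy0 : 0 <= Dy by exact: bigmax_ge_id.
have Dz0 : 0 <= Dz by exact: bigmax_ge_id.
have C0 : 0 <= p%:R * n%:R * `|L| by rewrite !mulr_ge0.
have Lam0 : (0 < p)%N -> 0 <= Lam.
  move=> p0; have := hLam (delta_mx (Ordinal p0) 0).
  by rewrite enorm_delta mulr1; apply: le_trans; exact: enorm_ge0.
have [n0|npos] := posnP n.
  have -> : enorm (- (invmx H *m grad f x) - dN) = 0.
    rewrite /enorm big1 ?sqrtr0 // => i _.
    by have := ltn_ord i; rewrite [X in (_ < X)%N]n0.
  have [p0|ppos] := posnP p.
    have -> : Dy = 0.
      rewrite /Dy /maxnorm; elim/big_rec: _ => // i v _ _.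
      by have := ltn_ord i; rewrite [X in (_ < X)%N]p0.
    by rewrite expr0n /= mul0r mulr0 mulr0.
  by rewrite !mulr_ge0 ?exprn_ge0 ?invr_ge0 // Lam0.
have ppos : (0 < p)%N := leq_trans npos hpn.
have Lp := Lam0 ppos.
have Dzn0 : Dz != 0.
  apply/negP => /eqP D0.
  have M0 := HL3 z Dz M erefl D0.
  by move: hr; rewrite M0 mxrank0 => n0'; rewrite -n0' in npos.
have hnorm : forall j, \sum_l z l j 0 * (dotv (z l) dN - b l) = 0.
  move: hpn; rewrite leq_eqVlt => /orP [/eqP e | lt].
    move=> j; apply: big1 => l _; rewrite hsq // ?subrr ?mulr0 //.
  exact: lsq_normal (hls lt).
have Mt0 : M^T *m res dN = 0 := HL1 z Dz M erefl b dN hnorm.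
set P := left_inv M.
have PM : P *m M = 1%:M by rewrite /P /left_inv -mulmxA mulVmx // MtM_unit.
set ds := - (invmx H *m grad f x).
have e2 : res ds - res dN = Dz *: (M *m (ds - dN)) := HL2 z Dz M erefl b ds dN Dzn0.
have Prv : P *m (res ds) = Dz *: (ds - dN).
  have -> : res ds = (res ds - res dN) + res dN by rewrite subrK.
  rewrite e2 mulmxDr -scalemxAr mulmxA PM mul1mx.
  by rewrite /P /left_inv -mulmxA Mt0 mulmx0 addr0.
have hds : ds - dN = Dz^-1 *: (P *m res ds).
  by rewrite Prv scalerA mulVf // scale1r.
rewrite hds enormZ ger0_norm ?invr_ge0 //.
have rb : enorm (res ds) <= p%:R * (n%:R * `|L| * Dy ^+ 3).
  apply: (le_trans (enorm_le_sum _)).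
  rewrite mulr_natl -[X in _ *+ X]card_ord -sumr_const; apply: ler_sum => l _.
  rewrite mxE; apply: (le_trans (resid f L x (y l) hC HL hU)).
  apply: ler_wpM2l; first by rewrite mulr_ge0.
  apply: lerXn2r; rewrite ?nnegrE ?enorm_ge0 //.
  exact: (le_bigmax _ (fun l => enorm (y l - x)) l).
have Di : 0 <= Dz^-1 by rewrite invr_ge0.
apply: (le_trans (ler_wpM2l Di (hLam _))).
apply: (@le_trans _ _ (Dz^-1 * (Lam * (p%:R * (n%:R * `|L| * Dy ^+ 3))))).
  by apply: ler_wpM2l => //; apply: ler_wpM2l.
by rewrite le_eqVlt; apply/orP; left; apply/eqP; ring.
Qed.
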